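(* Let $f$ be a function as described in the context and $\rho>0$. For $z,\beta\in[0,1]$ let $h(z,\beta)\coloneqq\beta f\left(\frac{z}{\beta}\right)+(1-\beta)f\left(\frac{1-z}{1-\beta}\right)$, and for $d\in\mathbb{N}_+$ and $\beta_1,\dots,\beta_d\in[0,1]$ define $$g_{f,\rho}(\beta_1,\dots,\beta_d)\coloneqq\inf\left\{z\in[0,1]:\inf_{\lambda_1,\dots,\lambda_d\ge0,\ \sum_i\lambda_i=1}h\left(z,\sum_{i=1}^d\lambda_i\beta_i\right)\le\rho\right\}$$ (for $d=1$ this is $g_{f,\rho}(\beta)=\inf\{z\in[0,1]:h(z,\beta)\le\rho\}$). Then for any $d\in\mathbb{N}_+$ and $\beta_1,\dots,\beta_d\in[0,1]$, $$g_{f,\rho}(\beta_1,\dots,\beta_d)=g_{f,\rho}\left(\min_{1\le i\le d}\beta_i\right).$$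
   Context: $f:\mathbb{R}\to\mathbb{R}\cup\{+\infty\}$ is a closed convex function with $f(1)=0$ and $f(t)=+\infty$ for $t<0$. *)

(* Defs.v *)
From HB Require Import structures.
From mathcomp Require Import all_boot all_order all_algebra.
From mathcomp Require Import all_classical all_reals all_analysis.
Set Implicit Arguments. Unset Strict Implicit. Unset Printing Implicit Defensive.
Import Order.TTheory GRing.Theory Num.Theory.
Import numFieldNormedType.Exports.
Local Open Scope classical_set_scope.
Local Open Scope ring_scope.

Definition proper_ext {R : realType} (f : R -> \bar R) : Prop :=
  forall x, f x != -oo%E.

Definition ext_convex {R : realType} (f : R -> \bar R) : Prop :=
  forall (x y t : R), (0 <= t <= 1)%R ->
    (f (t * x + (1 - t) * y)%R <= t%:E * f x + (1 - t)%R%:E * f y)%E.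

Definition epi_closed {R : realType} (f : R -> \bar R) : Prop :=
  closed [set p : R * R | (f p.1 <= p.2%:E)%E].

Definition fdiv_gen {R : realType} (f : R -> \bar R) : Prop :=
  [/\ proper_ext f, ext_convex f, epi_closed f, f 1 = 0%E &
      forall t, t < 0 -> f t = +oo%E].

Definition fslope_inf {R : realType} (f : R -> \bar R) : \bar R :=
  lim ((fun t : R => (f t * (t^-1)%:E)%E) @ +oo).

(* perspective b * f(a/b), with the usual conventions at b = 0:
   0 f(0/0) = 0 and 0 f(a/0) = a * f'(oo) for a > 0 *)
Definition persp {R : realType} (f : R -> \bar R) (a b : R) : \bar R :=
  if 0 < b then (b%:E * f (a / b)%R)%E
  else if a == 0 then 0%E else (a%:E * fslope_inf f)%E.

Definition hfun {R : realType} (f : R -> \bar R) (z b : R) : \bar R :=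
  (persp f z b + persp f (1 - z)%R (1 - b)%R)%E.

Definition g1 {R : realType} (f : R -> \bar R) (rho : R) (b : R) : \bar R :=
  ereal_inf [set z%:E | z in [set z : R | 0 <= z <= 1 /\ (hfun f z b <= rho%:E)%E]].

Definition gd {R : realType} (f : R -> \bar R) (rho : R) (d : nat)
  (beta : 'I_d -> R) : \bar R :=
  ereal_inf [set z%:E | z in [set z : R | 0 <= z <= 1 /\
    (ereal_inf [set hfun f z (\sum_(i < d) lam i * beta i)%R |
        lam in [set lam : 'I_d -> R | (forall i, (0 <= lam i)%R) /\
                                       (\sum_(i < d) lam i = 1)%R]]
       <= rho%:E)%E]].

(* Main.v *)
Require Import Defs.
From HB Require Import structures.
From mathcomp Require Import all_boot all_order all_algebra.
From mathcomp Require Import all_classical all_reals all_analysis.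
From mathcomp Require Import ring lra.
Import Order.TTheory GRing.Theory Num.Theory.
Import numFieldNormedType.Exports.
Local Open Scope classical_set_scope.
Local Open Scope ring_scope.
Lemma mul_noo (R : realType) (p : R) (A : \bar R) :
  (0 <= p)%R -> A != -oo%E -> (p%:E * A)%E != -oo%E.
Proof.
move=> p0; case: A => [a| |] //= _.
have [->|pp] := eqVneq p 0; first by rewrite mul0e.
by rewrite gt0_muley // lte_fin lt_neqAle eq_sym pp p0.
Qed.

Lemma scale_le (R : realType) (s : R) (A B : \bar R) :
  0 <= s <= 1 -> A != -oo%E -> B != -oo%E -> (0 <= A + B)%E ->
  (s%:E * A + s%:E * B <= A + B)%E.
Proof.
move=> /andP[s0 s1]; case: A => [a| |] //; case: B => [b| |] //= _ _.
- rewrite -!EFinM -!EFinD !lee_fin => ab; nra.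
- by move=> _; rewrite addey // leey.
- by move=> _; rewrite addye // leey.
- by move=> _; rewrite addye // leey.
Qed.

Lemma pos_comb (R : realType) (a c : R) (A B : \bar R) :
  0 < a -> 0 <= c -> A != -oo%E -> B != -oo%E ->
  (0 <= a%:E * A + c%:E * B)%E -> (0 <= A + (c / a)%:E * B)%E.
Proof.
move=> a0 c0; have an : a != 0 by rewrite gt_eqF.
have ca0 : 0 <= c / a by rewrite divr_ge0 // ltW.
case: A => [x| |] //; case: B => [y| |] //= _ _.
- rewrite -!EFinM -!EFinD !lee_fin => h.
  have -> : x + c / a * y = (a * x + c * y) / a by field.
  by rewrite divr_ge0 // ltW.
- move=> h; have [c00|cp] := eqVneq c 0.
    by move: h; rewrite c00 mul0r !mul0e !adde0 -EFinM !lee_fin pmulr_rge0.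
  rewrite gt0_muley ?addey ?leey // lte_fin divr_gt0 // lt_neqAle eq_sym cp c0 //.
- by move=> _; rewrite addye ?leey // mul_noo.
- by move=> _; rewrite addye ?leey // mul_noo.
Qed.
Lemma q_mono (R : realType) (f : R -> \bar R) (fcvx : ext_convex f)
  (f1 : f 1 = 0%E) (s t : R) : 1 < s -> s <= t ->
  (f s * ((s - 1)^-1)%:E <= f t * ((t - 1)^-1)%:E)%E.
Proof.
move=> s1 st.
have t1 : 1 < t by apply: lt_le_trans st.
set al := (t - s) / (t - 1).
have hal : 0 <= al <= 1.
  apply/andP; split; first by rewrite divr_ge0 // subr_ge0 // ltW.
  by rewrite ler_pdivrMr ?subr_gt0 // mul1r lerD2l lerN2 ltW.
have := fcvx 1 t al hal; rewrite f1 mule0 add0e.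
have -> : al * 1 + (1 - al) * t = s.
  by rewrite /al; field; rewrite subr_eq0 gt_eqF.
move=> h.
have s10 : 0 <= (s - 1)^-1 by rewrite invr_ge0 subr_ge0 ltW.
apply: (le_trans (lee_wpmul2r _ h)); first by rewrite lee_fin.
rewrite muleAC -EFinM muleC.
have -> : (1 - al) * (s - 1)^-1 = (t - 1)^-1.
  rewrite /al; field; rewrite subr_eq0 gt_eqF //.
  by rewrite subr_eq0 gt_eqF.
by [].
Qed.

Lemma slope_lb (R : realType) (f : R -> \bar R) (fcvx : ext_convex f)
  (f1 : f 1 = 0%E) (u : R) : 1 < u ->
  (f u * ((u - 1)^-1)%:E <= fslope_inf f)%E.
Proof.
move=> u1.
pose q := fun t : R => (f t * ((t - 1)^-1)%:E)%E.
pose Q := fun t : R => q (Num.max t u).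
have Qnd : {homo Q : x y / x <= y >-> (x <= y)%E}.
  move=> x y xy; rewrite /Q /q; apply: q_mono => //.
    by apply: lt_le_trans u1 _; rewrite le_max lexx orbT.
  by apply: le_max2.
pose S : \bar R := ereal_sup (range Q).
have hQ : Q r @[r --> +oo] --> S := nondecreasing_cvge Qnd.
have hr : ((t - 1) / t)%:E @[t --> +oo] --> (1%:E : \bar R).
  apply/fine_cvgP; split.
  by exists 0; split => //; rewrite num_real.
  rewrite /comp /=.
  have hinv : (fun t : R => t^-1) @ +oo --> (0:R).
    apply/(@gtr0_cvgV0 _ _ _ _ id).
      by exists 0; split; [rewrite num_real | move=> x].
    exact: cvg_id.
  have h1 : (fun t : R => 1 - t^-1) @ +oo --> (1 - 0 : R).
    apply: cvgB => //; exact: cvg_cst.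
  rewrite subr0 in h1.
  apply: cvg_trans; last exact: h1.
  apply: near_eq_cvg.
  exists 0; split; first by rewrite num_real.
  move=> t t0 /=; field; rewrite gt_eqF //.
have hdef : (S *? 1%:E)%E.
  have [Sf|Snf] := boolP (S \is a fin_num); first exact: mule_def_fin.
  exact: mule_def_infty_neq0.
have hM := cvgeM hdef hQ hr.
rewrite mule1 in hM.
have -> : fslope_inf f = S.
  apply: cvg_lim => //.
  apply: cvg_trans; last exact: hM.
  apply: near_eq_cvg.
  exists u; split; first by rewrite num_real.
  move=> t ut /=; rewrite /Q /q.
  have -> : Num.max t u = t by apply/max_idPl; exact: ltW.
  rewrite -muleA -EFinM.
  have t1 : 1 < t by apply: lt_trans ut.
  have -> : (t - 1)^-1 * ((t - 1) / t) = t^-1.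
    have tn0 : t != 0 by rewrite gt_eqF // (lt_trans _ t1).
    have t1n0 : t - 1 != 0 by rewrite subr_eq0 gt_eqF.
    by field; rewrite tn0 t1n0.
  by [].
have -> : (f u * ((u - 1)^-1)%:E)%E = Q u by rewrite /Q /q maxxx.
by apply: ereal_sup_ubound; exists u.
Unshelve. all: by end_near.
Qed.

Lemma persp_step (R : realType) (f : R -> \bar R) (fcvx : ext_convex f)
  (f1 : f 1 = 0%E) (p lam y : R) : 0 <= lam <= 1 -> 0 <= p ->
  (p%:E * f (lam * 1 + (1 - lam) * y)%R <= (p * (1 - lam))%R%:E * f y)%E.
Proof.
move=> hl p0; have := fcvx 1 y lam hl; rewrite f1 mule0 add0e => h.
by rewrite EFinM -muleA; apply: lee_wpmul2l; rewrite ?lee_fin.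
Qed.

Lemma unit_sub (R : realType) (x y : R) : 0 < y -> 0 <= x -> x <= y ->
  0 <= 1 - x / y <= 1.
Proof.
move=> y0 x0 xy; apply/andP; split.
  by rewrite subr_ge0 ler_pdivrMr // mul1r.
by rewrite lerBlDr lerDl divr_ge0 // ltW.
Qed.

Lemma key_lt (R : realType) (f : R -> \bar R) (fnoo : proper_ext f)
  (fcvx : ext_convex f) (f1 : f 1 = 0%E) (z m b : R) :
  0 <= z -> z < m -> m < b -> b < 1 -> (hfun f z m <= hfun f z b)%E.
Proof.
move=> z0 zm mb b1.
have m0 : 0 < m by apply: le_lt_trans zm.
have b0 : 0 < b by apply: lt_trans mb.
have m1 : 0 < 1 - m by rewrite subr_gt0 (lt_trans mb).
have b1' : 0 < 1 - b by rewrite subr_gt0.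
have bz : 0 < b - z by rewrite subr_gt0 (lt_trans zm).
have mz : 0 < m - z by rewrite subr_gt0.
rewrite /hfun /persp m0 b0 m1 b1'.
set t := (b - m) / (b - z).
have ht : 1 - t = (m - z) / (b - z) by rewrite /t; field; rewrite gt_eqF.
have t01 : 0 <= 1 - t <= 1.
  rewrite ht; apply/andP; split; first by rewrite divr_ge0 // ltW.
  by rewrite ler_pdivrMr // mul1r lerD2r ltW.
set lam := 1 - (1 - t) * b / m.
have e1 : z / m = lam * 1 + (1 - lam) * (z / b).
  rewrite /lam ht; field; rewrite !gt_eqF //.
have e1' : m * (1 - lam) = (1 - t) * b.
  rewrite /lam; field; rewrite gt_eqF //.
have hlam : 0 <= lam <= 1.
  have -> : lam = 1 - (m - z) * b / ((b - z) * m).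
    by rewrite /lam ht; field; rewrite !gt_eqF.
  by apply: unit_sub; [exact: mulr_gt0 | apply: mulr_ge0; exact: ltW | nra].
set mu := 1 - (1 - t) * (1 - b) / (1 - m).
have e2 : (1 - z) / (1 - m) = mu * 1 + (1 - mu) * ((1 - z) / (1 - b)).
  rewrite /mu ht; field; rewrite !gt_eqF //.
have e2' : (1 - m) * (1 - mu) = (1 - t) * (1 - b).
  rewrite /mu; field; rewrite gt_eqF //.
have hmu : 0 <= mu <= 1.
  have -> : mu = 1 - (m - z) * (1 - b) / ((b - z) * (1 - m)).
    by rewrite /mu ht; field; rewrite !gt_eqF.
  by apply: unit_sub; [exact: mulr_gt0 | apply: mulr_ge0; exact: ltW | nra].
have T1 := @persp_step _ _ fcvx f1 m lam (z / b) hlam (ltW m0).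
have T2 := @persp_step _ _ fcvx f1 (1 - m) mu ((1 - z) / (1 - b)) hmu (ltW m1).
rewrite -e1 e1' in T1; rewrite -e2 e2' in T2.
apply: le_trans (leeD T1 T2) _.
rewrite !EFinM -!muleA; apply: scale_le => //.
- by apply: mul_noo; [exact: ltW | exact: fnoo].
- by apply: mul_noo; [exact: ltW | exact: fnoo].
- have := fcvx (z / b) ((1 - z) / (1 - b)) b.
  have -> : b * (z / b) + (1 - b) * ((1 - z) / (1 - b)) = 1.
    by field; rewrite !gt_eqF.
  rewrite f1; apply; rewrite (ltW b0) ltW //.
Qed.

Lemma key_1 (R : realType) (f : R -> \bar R) (fnoo : proper_ext f)
  (fcvx : ext_convex f) (f1 : f 1 = 0%E) (z m : R) :
  0 <= z -> z < m -> m < 1 -> (hfun f z m <= hfun f z 1)%E.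
Proof.
move=> z0 zm m1'.
have m0 : 0 < m by apply: le_lt_trans zm.
have m1 : 0 < 1 - m by rewrite subr_gt0.
have z1 : 0 < 1 - z by rewrite subr_gt0 (lt_trans zm).
have mz : 0 < m - z by rewrite subr_gt0.
rewrite /hfun /persp m0 m1 ltr01 subrr ltxx (gt_eqF z1) divr1 mul1e.
set L := fslope_inf f.
have L2 : (f 2%R <= L)%E.
  have := @slope_lb _ _ fcvx f1 2 (ltr1n _ 2).
  by rewrite (_ : 2 - 1 = 1 :> R) ?invr1 ?mule1 //; ring.
have Lnoo : L != -oo%E.
  apply/negP => /eqP LL; move: L2; rewrite LL leeNy_eq; apply/negP; exact: fnoo.
set t := (1 - m) / (1 - z).
have ht : 1 - t = (m - z) / (1 - z) by rewrite /t; field; rewrite gt_eqF.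
set lam := 1 - (1 - t) / m.
have e1 : z / m = lam * 1 + (1 - lam) * z.
  rewrite /lam ht; field; rewrite !gt_eqF //.
have e1' : m * (1 - lam) = 1 - t.
  rewrite /lam; field; rewrite gt_eqF //.
have hlam : 0 <= lam <= 1.
  have -> : lam = 1 - (m - z) / ((1 - z) * m).
    by rewrite /lam ht; field; rewrite !gt_eqF.
  by apply: unit_sub; [exact: mulr_gt0 | exact: ltW | nra].
have T1 := @persp_step _ _ fcvx f1 m lam z hlam (ltW m0).
rewrite -e1 e1' in T1.
set u := (1 - z) / (1 - m).
have u1 : 1 < u.
  by rewrite /u ltr_pdivlMr // mul1r ltrD2l ltrN2.
have u1e : u - 1 = (m - z) / (1 - m) by rewrite /u; field; rewrite gt_eqF.
have T2 : ((1 - m)%:E * f u <= (1 - t)%:E * ((1 - z)%:E * L))%E.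
  rewrite (_ : ((1 - m)%:E * f u = (m - z)%:E * (f u * ((u - 1)^-1)%:E))%E);
    last first.
    rewrite [RHS]muleCA -EFinM muleC; congr (_ * _)%E; congr EFin.
    by rewrite u1e; field; rewrite !gt_eqF.
  apply: le_trans (lee_wpmul2l _ (@slope_lb _ _ fcvx f1 u u1)) _.
    by rewrite lee_fin ltW.
  rewrite muleA -EFinM (_ : (1 - t) * (1 - z) = m - z) //.
  by rewrite ht; field; rewrite gt_eqF.
apply: le_trans (leeD T1 T2) _.
apply: scale_le => //.
- by rewrite /t; apply: unit_sub => //; [exact: ltW | lra].
- by apply: mul_noo => //; exact: ltW.
- have z2 : 0 < 2 - z by lra.
  set a := (2 - z)^-1.
  have a0 : 0 < a by rewrite /a invr_gt0.
  have ha : 0 <= a <= 1.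
    by rewrite ltW //= /a invf_le1 //; lra.
  have := fcvx z 2 a ha.
  rewrite (_ : a * z + (1 - a) * 2 = 1); last by rewrite /a; field; rewrite gt_eqF.
  rewrite f1 => h.
  have a1 : 0 <= 1 - a by rewrite subr_ge0; case/andP: ha.
  have := @pos_comb _ a (1 - a) (f z) (f 2) a0 a1 (fnoo z) (fnoo 2) h.
  rewrite (_ : (1 - a) / a = 1 - z); last by rewrite /a; field; rewrite gt_eqF.
  move=> h2; apply: le_trans h2 _; apply: leeD2l; apply: lee_wpmul2l => //.
  by rewrite lee_fin ltW.
Qed.

Lemma key_all (R : realType) (f : R -> \bar R) (fnoo : proper_ext f)
  (fcvx : ext_convex f) (f1 : f 1 = 0%E) (z m b : R) :
  0 <= z -> z < m -> m <= b -> b <= 1 -> (hfun f z m <= hfun f z b)%E.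
Proof.
move=> z0 zm mb b1.
have [->|mb'] := eqVneq m b; first by [].
have mlb : m < b by rewrite lt_neqAle mb' mb.
have [->|b1'] := eqVneq b 1.
  by apply: key_1 => //; apply: lt_le_trans mlb b1.
by apply: key_lt => //; rewrite lt_neqAle b1' b1.
Qed.

Lemma hdiag (R : realType) (f : R -> \bar R) (f1 : f 1 = 0%E) (m : R) :
  0 <= m <= 1 -> hfun f m m = 0%E.
Proof.
case/andP => m0 m1; rewrite /hfun /persp.
have A : forall x : R, 0 <= x ->
    (if 0 < x then (x%:E * f (x / x)%R)%E
     else if x == 0 then 0%E else (x%:E * fslope_inf f)%E) = 0%E.
  move=> x x0; have [xp|] := ltP 0 x.
    by rewrite divff ?gt_eqF // f1 mule0.
  move=> x0'; have -> : x = 0 by apply: le_anti; rewrite x0' x0.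
  by rewrite eqxx.
by rewrite A // A ?adde0 // subr_ge0.
Qed.

Theorem lemma17 (R : realType) (f : R -> \bar R) (rho : R)
  (hf : fdiv_gen f) (hrho : 0 < rho)
  (d : nat) (hd : (0 < d)%N) (beta : 'I_d -> R)
  (hbeta : forall i, 0 <= beta i <= 1) :
  gd f rho beta = g1 f rho (\big[Num.min/1]_(i < d) beta i).
Proof.
case: hf => fnoo fcvx fclo f1 fneg.
set m := \big[Num.min/1]_(i < d) beta i.
have mle : forall i, m <= beta i by move=> i; exact: bigmin_le.
have [i0 _ mi0] : {i0 | i0 \in predT & m = beta i0}.
  apply: (@eq_bigmin _ _ _ _ (Ordinal hd)) => // i _.
  by case/andP: (hbeta i).
have m01 : 0 <= m <= 1 by rewrite mi0; exact: hbeta.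
have comb : forall lam : 'I_d -> R, (forall i, 0 <= lam i) ->
    \sum_(i < d) lam i = 1 -> m <= \sum_(i < d) lam i * beta i <= 1.
  move=> lam l0 l1; apply/andP; split.
    rewrite -[m]mul1r -l1 big_distrl /=; apply: ler_sum => i _.
    by apply: ler_wpM2l.
  rewrite -l1; apply: ler_sum => i _.
  by rewrite -[X in _ <= X]mulr1; apply: ler_wpM2l => //; case/andP: (hbeta i).
have hd0 : hfun f m m = 0%E by exact: hdiag.
pose e := fun i : 'I_d => if i == i0 then 1 else 0 : R.
have e0 : forall i, 0 <= e i by move=> i; rewrite /e; case: ifP.
have e1 : \sum_(i < d) e i = 1.
  rewrite (bigD1 i0) //= /e eqxx big1 ?addr0 // => i /negbTE ->.
  by [].
have e2 : \sum_(i < d) e i * beta i = m.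
  rewrite (bigD1 i0) //= /e eqxx mul1r big1 ?addr0 // => i /negbTE ->.
  by rewrite mul0r.
apply/le_anti/andP; split.
- apply: ereal_inf_le_tmp => _ [z [z01 hz] <-]; exists z => //; split => //.
  apply: le_trans hz; apply: ereal_inf_lbound.
  by exists e => //; rewrite e2.
- apply: le_ereal_inf_tmp => _ [z [z01 hz] <-].
  case: (leP m z) => [mz | zm].
    apply: le_trans (_ : m%:E <= z%:E)%E; last by rewrite lee_fin.
    apply: ereal_inf_lbound; exists m => //; split => //.
    by rewrite hd0 lee_fin ltW.
  apply: ereal_inf_lbound; exists z => //; split => //.
  apply: le_trans hz; apply: le_ereal_inf_tmp => _ [lam [l0 l1] <-].
  have /andP[c1 c2] := comb lam l0 l1.
  by apply: key_all => //; case/andP: z01.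
Qed.
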